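(* Let $\eta=4\times10^{-6}$. Then \[ \mathcal{N}\supset\Delta_1=\{(\gamma,\lambda)\in(0,1)^2: |\gamma-2^{-1/2}|<\eta,\ |\lambda-2^{-1/2}|<\eta\}, \] \[ \mathcal{M}\supset\Delta_2=\{\lambda\in\mathbb{D}: |\lambda-2^{-1/2}|<3\eta/4\}, \] \[ \mathcal{O}\supset\Delta_3=\{\lambda\in(0,1): |\lambda-2^{-1/2}|<\eta\}. \]
   Context: Let $\mathcal{B}=\{1+\sum_{n=1}^\infty a_n x^n : a_n\in\{-1,0,1\}\}$ (power series converging on the open unit disk $\mathbb{D}\subset\mathbb{C}$). Define $\mathcal{M}=\{z\in\mathbb{D}: \exists f\in\mathcal{B},\ f(z)=0\}$, $\mathcal{N}=\{(\gamma,\lambda)\in(-1,1)^2: \exists f\in\mathcal{B},\ f(\gamma)=f(\lambda)=0\}$, $\mathcal{O}=\{\lambda\in(-1,1): \exists f\in\mathcal{B},\ f(\lambda)=f'(\lambda)=0\}$. *)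

(* Defs.v *)
From Stdlib Require Import Reals.
From Coquelicot Require Import Coquelicot.
Open Scope R_scope.

Definition coeffB (a : nat -> R) : Prop :=
  a 0%nat = 1 /\ forall n : nat, (1 <= n)%nat -> a n = -1 \/ a n = 0 \/ a n = 1.

Definition zeroC (a : nat -> R) (z : C) : Prop :=
  is_series (fun n : nat => Cmult (RtoC (a n)) (Cpow z n)) (RtoC 0).

Definition setM (z : C) : Prop :=
  Cmod z < 1 /\ exists a, coeffB a /\ zeroC a z.

Definition setN (g l : R) : Prop :=
  -1 < g < 1 /\ -1 < l < 1 /\
  exists a, coeffB a /\ PSeries a g = 0 /\ PSeries a l = 0.

Definition setO (l : R) : Prop :=
  -1 < l < 1 /\
  exists a, coeffB a /\ PSeries a l = 0 /\ Derive (PSeries a) l = 0.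

Definition eta : R := 4 / 1000000.

(* Main.v *)
Require Import Defs.
From Stdlib Require Import Reals.
From Coquelicot Require Import Coquelicot.
From Stdlib Require Import ZArith List Bool Lra Lia ClassicalEpsilon Classical.
Open Scope R_scope.

Module Grid.
Import ListNotations.
Local Open Scope Z_scope.
Definition cols : list (list (Z*Z)) := [
  [];
  [];
  [];
  [];
  [];
  [];
  [];
  [];
  [];
  [];
  [];
  [];
  [];
  [];
  [];
  [];
  [];
  [];
  [];
  [(185,185)];
  [(127,127); (155,156); (183,184)];
  [(126,126); (154,154); (182,183)];
  [(124,126); (152,154); (178,178); (180,183)];
  [(120,125); (137,137); (149,154); (165,165); (177,182)];
  [(107,107); (115,115); (120,125); (135,136); (148,153); (163,164); (176,181)];
  [(106,106); (113,115); (117,124); (134,134); (141,143); (145,152); (162,163); (170,171); (173,180)];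
  [(101,101); (104,106); (112,123); (130,130); (132,134); (140,151); (158,158); (161,162); (168,179)];
  [(89,89); (101,106); (108,108); (110,121); (129,134); (138,149); (157,162); (167,178)];
  [(86,87); (95,95); (99,121); (123,123); (127,149); (151,152); (156,178)];
  [(86,86); (93,95); (97,123); (125,177)];
  [(81,82); (84,86); (92,176)];
  [(81,86); (90,175)];
  [(75,75); (79,87); (89,173)];
  [(73,75); (77,173)];
  [(72,171)];
  [(70,171)];
  [(67,67); (69,170)];
  [(67,168)];
  [(61,61); (65,168)];
  [(59,62); (64,167)];
  [(57,164)];
  [(56,164)];
  [(53,162)];
  [(51,161)];
  [(50,160)];
  [(49,158)];
  [(47,157)];
  [(47,156)];
  [(43,152)];
  [(42,152)];
  [(41,150)];
  [(39,149)];
  [(38,148)];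
  [(37,146)];
  [(35,143)];
  [(35,142)];
  [(32,135); (137,140)];
  [(31,134); (138,138)];
  [(31,132)];
  [(29,130); (132,132)];
  [(28,129)];
  [(28,127)];
  [(26,122); (124,126)];
  [(26,110); (112,120); (124,124)];
  [(24,109); (113,118)];
  [(23,107); (113,115); (117,118)];
  [(22,74); (76,102); (104,106); (113,113)];
  [(21,43); (47,48); (50,72); (76,76); (78,100); (104,104); (112,113)];
  [(21,32); (37,42); (50,61); (65,70); (78,89); (91,91); (93,98); (110,110)];
  [(20,31); (37,38); (41,41); (48,59); (65,67); (69,69); (76,87); (93,95); (98,98)];
  [(19,26); (28,29); (36,37); (47,54); (56,58); (65,65); (75,82); (84,86); (93,93)];
  [(18,23); (35,36); (46,51); (63,64); (74,79); (84,84); (92,92)];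
  [(17,22); (34,34); (45,50); (62,62); (74,79)];
  [(16,19); (21,21); (45,47); (73,75)];
  [(16,17); (45,45); (73,73)];
  [(15,16); (43,44); (72,72)];
  [(14,14)];
  [];
  [];
  [];
  [];
  [];
  [];
  [];
  [];
  [];
  [];
  [];
  [];
  [];
  [];
  [];
  [];
  [];
  [];
  []
]%Z.
Definition inb (k l : Z) : bool := (0 <=? k) && (k <? 96) && (0 <=? l) && (l <? 200).
Definition look (k l : Z) : bool := existsb (fun p => (fst p <=? l) && (l <=? snd p)) (nth (Z.to_nat k) cols []).
Definition alive (k l : Z) : bool := inb k l && look k l.
Fixpoint rng (k0 : Z) (n : nat) (P : Z -> bool) : bool := match n with O => true | S n' => P k0 && rng (k0+1) n' P end.
Definition box_ok i1 i2 j1 j2 := rng i1 (Z.to_nat (i2 - i1 + 1)) (fun k => rng j1 (Z.to_nat (j2 - j1 + 1)) (fun l => alive k l)).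
Definition WLf i j a := 707105*(i-48) + 141421*(j-100) + 4000000*a - 3400.
Definition WHf i j a := 707105*(i+1-48) + 141421*(j+1-100) + 4000000*a + 3400.
Definition ZLf j a := 141421*(j-100) + 4000000*a - 3400.
Definition ZHf j a := 141421*(j+1-100) + 4000000*a + 3400.
Definition tryd (i j a : Z) : bool :=
  let i1 := WLf i j a / 500000 + 48 in let i2 := WHf i j a / 500000 + 48 in
  let j1 := ZLf j a / 100000 + 100 in let j2 := ZHf j a / 100000 + 100 in
  (500000*(i1-48) <=? WLf i j a) && (WHf i j a <=? 500000*(i2+1-48)) &&
  (100000*(j1-100) <=? ZLf j a) && (ZHf j a <=? 100000*(j2+1-100)) && box_ok i1 i2 j1 j2.
Definition cell_ok i j := tryd i j 0 || tryd i j (-1) || tryd i j 1.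
Definition colchk (i : Z) : bool := forallb (fun p => rng (fst p) (Z.to_nat (snd p - fst p + 1)) (cell_ok i)) (nth (Z.to_nat i) cols []).
Lemma check_ok : rng 0 96 colchk = true. Proof. vm_compute. reflexivity. Qed.

Local Open Scope R_scope.


Definition wR (i : Z) : R := -6 + IZR i / 8.
Definition zR (j : Z) : R := -5/2 + IZR j / 40.
Definition Kset (w z : R) : Prop :=
  exists i j, alive i j = true /\ wR i <= w <= wR (i+1) /\ zR j <= z <= zR (j+1).
Definition a0 : R := 141421/100000.
Definition e0 : R := 1/10000.

Ltac zpush := repeat (rewrite plus_IZR || rewrite minus_IZR || rewrite mult_IZR || rewrite opp_IZR).

Lemma rng_spec : forall n k0 P, rng k0 n P = true ->
  forall k, (k0 <= k < k0 + Z.of_nat n)%Z -> P k = true.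
Proof.
  induction n as [|n IH]; intros k0 P H k Hk; simpl in *.
  - lia.
  - apply andb_true_iff in H as [H1 H2].
    destruct (Z.eq_dec k k0) as [->|Hne]; [exact H1|].
    apply (IH (k0+1)%Z); [exact H2|lia].
Qed.

Lemma alive_bounds : forall i j, alive i j = true ->
  (0 <= i < 96)%Z /\ (0 <= j < 200)%Z.
Proof.
  intros i j H; unfold alive in H.
  apply andb_true_iff in H as [H _]. unfold inb in H.
  repeat (apply andb_true_iff in H as [H ?]).
  repeat match goal with H : (_ <=? _)%Z = true |- _ => apply Z.leb_le in H
                    | H : (_ <? _)%Z = true |- _ => apply Z.ltb_lt in H end.
  lia.
Qed.

Lemma cell_of_alive : forall i j, alive i j = true -> cell_ok i j = true.
Proof.
  intros i j H.
  destruct (alive_bounds i j H) as [Hi Hj].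
  assert (Hi2 : (0 <= i < 0 + Z.of_nat 96)%Z) by lia.
  pose proof (rng_spec 96 0 colchk check_ok i Hi2) as C2. unfold colchk in C2.
  unfold alive in H.
  apply andb_true_iff in H as [_ H]. unfold look in H.
  apply existsb_exists in H as [p [Hp Hpj]].
  rewrite forallb_forall in C2.
  specialize (C2 p Hp).
  apply andb_true_iff in Hpj as [H1 H2]. apply Z.leb_le in H1; apply Z.leb_le in H2.
  apply (rng_spec _ _ _ C2 j).
  rewrite Z2Nat.id by lia. lia.
Qed.

Lemma disc : forall (g : Z -> R), (forall k, g k <= g (k+1)%Z) ->
  forall n i1 x, g i1 <= x <= g (i1 + Z.of_nat n + 1)%Z ->
  exists k, (i1 <= k <= i1 + Z.of_nat n)%Z /\ g k <= x <= g (k+1)%Z.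
Proof.
  intros g Hg. induction n as [|n IH]; intros i1 x Hx.
  - exists i1. split; [lia|]. replace (i1 + Z.of_nat 0 + 1)%Z with (i1+1)%Z in Hx by lia. exact Hx.
  - destruct (Rle_dec x (g (i1+1)%Z)) as [Hle|Hnle].
    + exists i1. split; [lia|lra].
    + destruct (IH (i1+1)%Z x) as [k [Hk1 Hk2]].
      * split; [lra|]. replace (i1 + 1 + Z.of_nat n + 1)%Z with (i1 + Z.of_nat (S n) + 1)%Z by lia. lra.
      * exists k. split; [lia|exact Hk2].
Qed.

Lemma disc2 : forall (g : Z -> R), (forall k, g k <= g (k+1)%Z) ->
  forall i1 i2 x, (i1 <= i2)%Z -> g i1 <= x <= g (i2 + 1)%Z ->
  exists k, (i1 <= k <= i2)%Z /\ g k <= x <= g (k+1)%Z.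
Proof.
  intros g Hg i1 i2 x Hi Hx.
  destruct (disc g Hg (Z.to_nat (i2 - i1)) i1 x) as [k [Hk1 Hk2]].
  - rewrite Z2Nat.id by lia. replace (i1 + (i2 - i1) + 1)%Z with (i2+1)%Z by lia. exact Hx.
  - exists k. rewrite Z2Nat.id in Hk1 by lia. split; [lia|exact Hk2].
Qed.

Lemma wR_mono : forall k, wR k <= wR (k+1)%Z.
Proof. intros k; unfold wR; rewrite plus_IZR; lra. Qed.
Lemma zR_mono : forall k, zR k <= zR (k+1)%Z.
Proof. intros k; unfold zR; rewrite plus_IZR; lra. Qed.

Lemma Rabs_le_between : forall x a, Rabs x <= a -> -a <= x <= a.
Proof. intros x a H. unfold Rabs in H. destruct (Rcase_abs x); lra. Qed.

Lemma lin_bound : forall A w w1 w2 M, Rabs (A - a0) <= e0 -> w1 <= w <= w2 -> Rabs w <= M ->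
  a0 * w1 - e0 * M <= A * w <= a0 * w2 + e0 * M.
Proof.
  intros A w w1 w2 M HA Hw HM.
  assert (H1 : Rabs ((A - a0) * w) <= e0 * M).
  { rewrite Rabs_mult. apply Rmult_le_compat; auto using Rabs_pos. }
  apply Rabs_le_between in H1.
  assert (a0 * w1 <= a0 * w <= a0 * w2) by (unfold a0; split; apply Rmult_le_compat_l; lra).
  replace (A * w) with (a0 * w + (A - a0) * w) by ring. lra.
Qed.

Lemma lin_bound0 : forall C w M, Rabs C <= e0 -> Rabs w <= M -> - (e0 * M) <= C * w <= e0 * M.
Proof.
  intros C w M HC HM. apply Rabs_le_between. rewrite Rabs_mult.
  apply Rmult_le_compat; auto using Rabs_pos.
Qed.

Lemma try_sound : forall A B C, Rabs (A - a0) <= e0 -> Rabs (B - a0) <= e0 -> Rabs C <= e0 ->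
  forall i j a w z, alive i j = true -> tryd i j a = true ->
  wR i <= w <= wR (i+1) -> zR j <= z <= zR (j+1) ->
  Kset (A*w+B*z+IZR a) (C*w+B*z+IZR a).
Proof.
  intros A B C HA HB HC i j a w z Hal Ht Hw Hz.
  destruct (alive_bounds i j Hal) as [Hi Hj].
  unfold tryd in Ht.
  remember (WLf i j a / 500000 + 48)%Z as i1.
  remember (WHf i j a / 500000 + 48)%Z as i2.
  remember (ZLf j a / 100000 + 100)%Z as j1.
  remember (ZHf j a / 100000 + 100)%Z as j2.
  repeat (apply andb_true_iff in Ht as [Ht ?]).
  repeat match goal with H : (_ <=? _)%Z = true |- _ => apply Z.leb_le in H end.
  assert (HWLH : (WLf i j a < WHf i j a)%Z) by (unfold WLf, WHf; lia).
  assert (HZLH : (ZLf j a < ZHf j a)%Z) by (unfold ZLf, ZHf; lia).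
  assert (Hi12 : (i1 <= i2)%Z) by lia.
  assert (Hj12 : (j1 <= j2)%Z) by lia.
  assert (Hwb : Rabs w <= 6).
  { apply Rabs_le. unfold wR in Hw. rewrite plus_IZR in Hw.
    assert (0 <= IZR i) by (apply IZR_le; lia). assert (IZR i <= 95) by (apply IZR_le; lia). lra. }
  assert (Hzb : Rabs z <= 5/2).
  { apply Rabs_le. unfold zR in Hz. rewrite plus_IZR in Hz.
    assert (0 <= IZR j) by (apply IZR_le; lia). assert (IZR j <= 199) by (apply IZR_le; lia). lra. }
  pose proof (lin_bound A w (wR i) (wR (i+1)) 6 HA Hw Hwb) as LA.
  pose proof (lin_bound B z (zR j) (zR (j+1)) (5/2) HB Hz Hzb) as LB.
  pose proof (lin_bound0 C w 6 HC Hwb) as LC.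
  assert (EWL : IZR (WLf i j a) = 707105*(IZR i - 48) + 141421*(IZR j - 100) + 4000000*IZR a - 3400)
    by (unfold WLf; zpush; ring).
  assert (EWH : IZR (WHf i j a) = 707105*(IZR i + 1 - 48) + 141421*(IZR j + 1 - 100) + 4000000*IZR a + 3400)
    by (unfold WHf; zpush; ring).
  assert (EZL : IZR (ZLf j a) = 141421*(IZR j - 100) + 4000000*IZR a - 3400)
    by (unfold ZLf; zpush; ring).
  assert (EZH : IZR (ZHf j a) = 141421*(IZR j + 1 - 100) + 4000000*IZR a + 3400)
    by (unfold ZHf; zpush; ring).
  assert (R1 : 500000*(IZR i1 - 48) <= IZR (WLf i j a)) by (rewrite <- minus_IZR, <- mult_IZR; apply IZR_le; lia).
  assert (R2 : IZR (WHf i j a) <= 500000*(IZR i2 + 1 - 48)) by (rewrite <- plus_IZR, <- minus_IZR, <- mult_IZR; apply IZR_le; lia).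
  assert (R3 : 100000*(IZR j1 - 100) <= IZR (ZLf j a)) by (rewrite <- minus_IZR, <- mult_IZR; apply IZR_le; lia).
  assert (R4 : IZR (ZHf j a) <= 100000*(IZR j2 + 1 - 100)) by (rewrite <- plus_IZR, <- minus_IZR, <- mult_IZR; apply IZR_le; lia).
  unfold wR, zR, a0, e0 in LA, LB, LC. rewrite plus_IZR in LA, LB.
  destruct (disc2 wR wR_mono i1 i2 (A*w+B*z+IZR a) Hi12) as [k [Hk1 Hk2]].
  { unfold wR; rewrite plus_IZR. lra. }
  destruct (disc2 zR zR_mono j1 j2 (C*w+B*z+IZR a) Hj12) as [l [Hl1 Hl2]].
  { unfold zR; rewrite plus_IZR. lra. }
  exists k, l. split; [|split; assumption].
  match goal with H : box_ok _ _ _ _ = true |- _ => rename H into Hbox end.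
  unfold box_ok in Hbox.
  assert (Hb := rng_spec _ _ _ Hbox k ltac:(rewrite Z2Nat.id by lia; lia)). cbv beta in Hb.
  exact (rng_spec _ _ _ Hb l ltac:(rewrite Z2Nat.id by lia; lia)).
Qed.

Lemma trap : forall A B C, Rabs (A - a0) <= e0 -> Rabs (B - a0) <= e0 -> Rabs C <= e0 ->
  forall w z, Kset w z -> exists a, (a = -1 \/ a = 0 \/ a = 1) /\ Kset (A*w+B*z+a) (C*w+B*z+a).
Proof.
  intros A B C HA HB HC w z [i [j [Hal [Hw Hz]]]].
  pose proof (cell_of_alive i j Hal) as Hc. unfold cell_ok in Hc.
  apply orb_true_iff in Hc as [Hc|Hc]; [apply orb_true_iff in Hc as [Hc|Hc]|].
  - exists (IZR 0). split; [right; left; reflexivity|]. eapply try_sound; eauto.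
  - exists (IZR (-1)). split; [left; reflexivity|]. eapply try_sound; eauto.
  - exists (IZR 1). split; [right; right; reflexivity|]. eapply try_sound; eauto.
Qed.

Lemma Kset_bound : forall w z, Kset w z -> Rabs w <= 6 /\ Rabs z <= 5/2.
Proof.
  intros w z [i [j [Hal [Hw Hz]]]].
  destruct (alive_bounds i j Hal) as [Hi Hj].
  unfold wR, zR in *. rewrite plus_IZR in Hw, Hz.
  assert (0 <= IZR i) by (apply IZR_le; lia). assert (IZR i <= 95) by (apply IZR_le; lia).
  assert (0 <= IZR j) by (apply IZR_le; lia). assert (IZR j <= 199) by (apply IZR_le; lia).
  split; apply Rabs_le; lra.
Qed.

Lemma Kset_start : Kset 1 1.
Proof.
  exists 56%Z, 140%Z. split; [vm_compute; reflexivity|].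
  unfold wR, zR. rewrite !plus_IZR. split; split; lra.
Qed.


End Grid.
Import Grid.

Module SeqPart.

Lemma seq_exists : forall T D m, m <> 0 ->
  Rabs (T - D/m - a0) <= e0 -> Rabs (D/m - a0) <= e0 -> Rabs (T - D/m - m) <= e0 ->
  exists (a u : nat -> R), u 0%nat = 0 /\ u 1%nat = 0 /\ a 0%nat = 1 /\
    (forall n, (1 <= n)%nat -> a n = -1 \/ a n = 0 \/ a n = 1) /\
    (forall n, Rabs (u n) <= 6) /\
    (forall n, a n = u (S (S n)) - T * u (S n) + D * u n).
Proof.
  intros T D m Hm HA HB HC.
  set (C := T - D/m - m) in *. set (A := T - D/m) in *. set (B := D/m) in *.
  assert (EA : A = T - D/m) by reflexivity. assert (EB : B = D/m) by reflexivity.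
  assert (EC : C = T - D/m - m) by reflexivity. clearbody A B C.
  assert (SE : forall p : R*R, {q : R*(R*R) | Kset (fst p) (snd p) ->
     (fst q = -1 \/ fst q = 0 \/ fst q = 1) /\
     snd q = (A*fst p + B*snd p + fst q, C*fst p + B*snd p + fst q) /\
     Kset (fst (snd q)) (snd (snd q))}).
  { intros p. apply constructive_indefinite_description.
    destruct (classic (Kset (fst p) (snd p))) as [H|H].
    - destruct (trap A B C HA HB HC _ _ H) as [a [Ha HK]].
      exists (a, (A*fst p + B*snd p + a, C*fst p + B*snd p + a)). simpl. intros _. auto.
    - exists (0,(0,0)). intros H'. contradiction. }
  pose (st := fix st (n : nat) : R*R := match n with O => (1,1) | S k => snd (proj1_sig (SE (st k))) end).
  pose (dg := fun n : nat => match n with O => 1 | S k => fst (proj1_sig (SE (st k))) end).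
  pose (u := fun n : nat => match n with O => 0 | S O => 0 | S (S k) => fst (st k) end).
  assert (HK : forall n, Kset (fst (st n)) (snd (st n))).
  { induction n as [|n IH].
    - simpl. exact Kset_start.
    - simpl. destruct (proj2_sig (SE (st n)) IH) as [_ [_ H]]. exact H. }
  assert (Hstep : forall n, (dg (S n) = -1 \/ dg (S n) = 0 \/ dg (S n) = 1) /\
     st (S n) = (A*fst (st n) + B*snd (st n) + dg (S n), C*fst (st n) + B*snd (st n) + dg (S n))).
  { intros n. destruct (proj2_sig (SE (st n)) (HK n)) as [H1 [H2 _]]. simpl. split; [exact H1|exact H2]. }
  assert (Hinv : forall n, snd (st n) = fst (st n) - m * u (S n)).
  { induction n as [|n IH].
    - unfold st, u; simpl. ring.
    - destruct (Hstep n) as [_ E]. rewrite E. change (u (S (S n))) with (fst (st n)). simpl fst; simpl snd.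
      generalize (dg (S n)) (fst (proj1_sig (SE (st n)))); intros d1 d2. rewrite EC, EA. ring. }
  assert (Hrec : forall n, fst (st (S n)) = T * fst (st n) - D * u (S n) + dg (S n)).
  { intros n. destruct (Hstep n) as [_ E]. rewrite E. cbn [fst].
    generalize (dg (S n)); intros d1. rewrite (Hinv n). rewrite EA, EB. field. exact Hm. }
  exists dg, u. split; [reflexivity|]. split; [reflexivity|]. split; [reflexivity|]. split; [|split].
  - intros n Hn. destruct n as [|n]; [lia|]. exact (proj1 (Hstep n)).
  - intros n. destruct n as [|[|n]]; simpl u; try (rewrite Rabs_R0; lra).
    exact (proj1 (Kset_bound _ _ (HK n))).
  - intros n. destruct n as [|[|n]].
    + unfold dg, u, st; simpl. ring.
    + change (dg 1%nat = fst (st 1%nat) - T * fst (st 0%nat) + D * 0).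
      rewrite (Hrec 0%nat). simpl u. ring.
    + change (dg (S (S n)) = fst (st (S (S n))) - T * fst (st (S n)) + D * fst (st n)).
      rewrite (Hrec (S n)). simpl u. ring.
Qed.

End SeqPart.
Import SeqPart.

Module SerPart.

Lemma psum_R : forall (a u : nat -> R) T D x,
  (forall n, a n = u (S (S n)) - T * u (S n) + D * u n) -> u 0%nat = 0 -> u 1%nat = 0 ->
  1 - T * x + D * x^2 = 0 ->
  forall N, sum_n (fun k => a k * x^k) N = x^(S N) * (T*u (S (S N)) - D*x*u (S (S N)) - D*u (S N)).
Proof.
  intros a u T D x Ha H0 H1 Hp N. induction N as [|N IH].
  - rewrite sum_O. rewrite Ha, H0, H1. simpl.
    replace (T * 0) with 0 by ring.
    transitivity (u 2%nat * (1 - (1 - T*x + D*x^2))); [rewrite Hp; ring| ring].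
  - rewrite sum_Sn. change plus with Rplus. rewrite IH. cbv beta. rewrite (Ha (S N)).
    apply Rminus_diag_uniq.
    match goal with |- ?L - ?R = 0 =>
      replace (L - R) with (x^(S N) * u (S (S (S N))) * (1 - T * x + D * x^2)) by (simpl; ring) end.
    rewrite Hp. ring.
Qed.

Lemma psum_C : forall (a u : nat -> R) T D (z : C),
  (forall n, a n = u (S (S n)) - T * u (S n) + D * u n) -> u 0%nat = 0 -> u 1%nat = 0 ->
  (1 - RtoC T * z + RtoC D * Cpow z 2 = 0)%C ->
  forall N, sum_n (fun k => Cmult (RtoC (a k)) (Cpow z k)) N =
     (Cpow z (S N) * (RtoC T * RtoC (u (S (S N))) - RtoC D * z * RtoC (u (S (S N))) - RtoC D * RtoC (u (S N))))%C.
Proof.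
  intros a u T D z Ha H0 H1 Hp N. induction N as [|N IH].
  - rewrite sum_O. rewrite Ha, H0, H1. rewrite <- ?RtoC_plus, <- ?RtoC_minus, <- ?RtoC_mult.
    rewrite RtoC_plus, RtoC_minus, !RtoC_mult.
    transitivity (RtoC (u 2%nat) * (1 - (1 - RtoC T*z + RtoC D*Cpow z 2)))%C; [rewrite Hp; simpl; ring| simpl; ring].
  - rewrite sum_Sn. change plus with Cplus. rewrite IH. cbv beta. rewrite (Ha (S N)).
    rewrite RtoC_plus, RtoC_minus, !RtoC_mult.
    apply Ceq_minus.
    match goal with |- (Cminus ?L ?R) = _ =>
      replace (L - R)%C with (Cpow z (S N) * RtoC (u (S (S (S N)))) * (1 - RtoC T * z + RtoC D * Cpow z 2))%C by (simpl; ring) end.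
    rewrite Hp. ring.
Qed.

Lemma geom_bound_lim : forall r K, Rabs r < 1 -> is_lim_seq (fun n => K * Rabs r ^ n) 0.
Proof.
  intros r K Hr.
  replace (Finite 0) with (Rbar_mult K 0) by (simpl; f_equal; ring).
  apply is_lim_seq_scal_l. apply is_lim_seq_geom. rewrite Rabs_Rabsolu. exact Hr.
Qed.

Lemma Rabs_le_between' : forall x a, Rabs x <= a -> -a <= x <= a.
Proof. intros x a H. unfold Rabs in H. destruct (Rcase_abs x); lra. Qed.

Lemma absE : forall T D x u2 u1, Rabs u2 <= 6 -> Rabs u1 <= 6 -> Rabs x <= 1 ->
  Rabs (T*u2 - D*x*u2 - D*u1) <= 6*(Rabs T + 2*Rabs D).
Proof.
  intros T D x u2 u1 H2 H1 Hx.
  assert (A1 : Rabs (T*u2) <= Rabs T * 6) by (rewrite Rabs_mult; apply Rmult_le_compat_l; auto using Rabs_pos).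
  assert (A2 : Rabs (D*x*u2) <= Rabs D * 6).
  { rewrite !Rabs_mult. rewrite Rmult_assoc. apply Rmult_le_compat_l; [apply Rabs_pos|].
    replace 6 with (1*6) by ring. apply Rmult_le_compat; auto using Rabs_pos. }
  assert (A3 : Rabs (D*u1) <= Rabs D * 6) by (rewrite Rabs_mult; apply Rmult_le_compat_l; auto using Rabs_pos).
  unfold Rminus. eapply Rle_trans; [apply Rabs_triang|]. rewrite Rabs_Ropp.
  eapply Rle_trans; [apply Rplus_le_compat_r; apply Rabs_triang|]. rewrite Rabs_Ropp. lra.
Qed.

Lemma pow_tail_bound : forall x E K N, Rabs x <= 1 -> Rabs E <= K ->
  Rabs (x^(S N) * E) <= K * Rabs x ^ N.
Proof.
  intros x E K N Hx HE. rewrite Rabs_mult, <- RPow_abs. simpl.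
  assert (0 <= Rabs x ^ N) by (apply pow_le; apply Rabs_pos).
  replace (K * Rabs x ^ N) with ((1 * Rabs x ^ N) * K) by ring.
  apply Rmult_le_compat; auto using Rabs_pos.
  - apply Rmult_le_pos; auto using Rabs_pos.
  - apply Rmult_le_compat_r; auto.
Qed.

Lemma squeeze0 : forall (v : nat -> R) r K, Rabs r < 1 -> (forall n, Rabs (v n) <= K * Rabs r ^ n) ->
  is_lim_seq v 0.
Proof.
  intros v r K Hr Hb.
  apply is_lim_seq_le_le with (u := fun n => - (K * Rabs r ^ n)) (w := fun n => K * Rabs r ^ n).
  - intros n. apply Rabs_le_between'. apply Hb.
  - pose proof (proj1 (is_lim_seq_opp _ _) (geom_bound_lim r K Hr)) as L. simpl in L.
    rewrite Ropp_0 in L. exact L.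
  - apply geom_bound_lim. exact Hr.
Qed.

Lemma series_zero_R : forall (a u : nat -> R) T D x,
  (forall n, a n = u (S (S n)) - T * u (S n) + D * u n) -> u 0%nat = 0 -> u 1%nat = 0 ->
  (forall n, Rabs (u n) <= 6) -> Rabs x < 1 ->
  1 - T * x + D * x^2 = 0 -> PSeries a x = 0.
Proof.
  intros a u T D x Ha H0 H1 Hu Hx Hp.
  unfold PSeries. apply is_series_unique.
  unfold is_series.
  change (is_lim_seq (sum_n (fun k => a k * x^k)) 0).
  apply (is_lim_seq_ext (fun N => x^(S N) * (T*u (S (S N)) - D*x*u (S (S N)) - D*u (S N)))).
  - intros N. symmetry. apply (psum_R a u T D x Ha H0 H1 Hp).
  - apply squeeze0 with (r := x) (K := 6*(Rabs T + 2*Rabs D)); [exact Hx|].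
    intros n. apply pow_tail_bound; [lra|]. apply absE; auto. lra.
Qed.

Lemma series_zero_C : forall (a u : nat -> R) T D (z : C),
  (forall n, a n = u (S (S n)) - T * u (S n) + D * u n) -> u 0%nat = 0 -> u 1%nat = 0 ->
  (forall n, Rabs (u n) <= 6) -> Cmod z < 1 ->
  (1 - RtoC T * z + RtoC D * Cpow z 2 = 0)%C ->
  is_series (fun n => Cmult (RtoC (a n)) (Cpow z n)) (RtoC 0).
Proof.
  intros a u T D z Ha H0 H1 Hu Hz Hp.
  apply (filterlim_norm_zero (fun N => sum_n (fun n => Cmult (RtoC (a n)) (Cpow z n)) N)).
  change (is_lim_seq (fun N => Cmod (sum_n (fun n => Cmult (RtoC (a n)) (Cpow z n)) N)) 0).
  apply (is_lim_seq_ext (fun N => Cmod (Cpow z (S N) * (RtoC T * RtoC (u (S (S N))) - RtoC D * z * RtoC (u (S (S N))) - RtoC D * RtoC (u (S N))))%C)).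
  - intros N. rewrite (psum_C a u T D z Ha H0 H1 Hp). reflexivity.
  - apply squeeze0 with (r := Cmod z) (K := 6*(Rabs T + 2*Rabs D)).
    + rewrite Rabs_pos_eq by apply Cmod_ge_0. exact Hz.
    + intros n. rewrite (Rabs_pos_eq (Cmod z)) by apply Cmod_ge_0. rewrite Rabs_pos_eq by apply Cmod_ge_0.
      rewrite Cmod_mult, Cmod_pow. simpl pow.
      assert (0 <= Cmod z ^ n) by (apply pow_le; apply Cmod_ge_0).
      assert (HE : Cmod (RtoC T * RtoC (u (S (S n))) - RtoC D * z * RtoC (u (S (S n))) - RtoC D * RtoC (u (S n)))%C
                <= 6*(Rabs T + 2*Rabs D)).
      { unfold Cminus. eapply Rle_trans; [apply Cmod_triangle|]. rewrite Cmod_opp.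
        eapply Rle_trans; [apply Rplus_le_compat_r; apply Cmod_triangle|]. rewrite Cmod_opp.
        rewrite !Cmod_mult, !Cmod_R.
        assert (Hz' : Cmod z <= 1) by lra.
        pose proof (Hu (S (S n))). pose proof (Hu (S n)).
        assert (Rabs T * Rabs (u (S (S n))) <= Rabs T * 6) by (apply Rmult_le_compat_l; auto using Rabs_pos).
        assert (Rabs D * Cmod z * Rabs (u (S (S n))) <= Rabs D * 6).
        { rewrite Rmult_assoc. apply Rmult_le_compat_l; [apply Rabs_pos|].
          replace 6 with (1*6) by ring. apply Rmult_le_compat; auto using Rabs_pos, Cmod_ge_0. }
        assert (Rabs D * Rabs (u (S n)) <= Rabs D * 6) by (apply Rmult_le_compat_l; auto using Rabs_pos).
        lra. }
      replace (6 * (Rabs T + 2 * Rabs D) * Cmod z ^ n) with ((1 * Cmod z ^ n) * (6 * (Rabs T + 2 * Rabs D))) by ring.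
      apply Rmult_le_compat; auto using Cmod_ge_0.
      * apply Rmult_le_pos; auto using Cmod_ge_0.
      * apply Rmult_le_compat_r; auto. lra.
Qed.

Lemma squeeze_gen : forall (v w : nat -> R), (forall n, Rabs (v n) <= w n) -> is_lim_seq w 0 -> is_lim_seq v 0.
Proof.
  intros v w Hb Hw.
  apply is_lim_seq_le_le with (u := fun n => - w n) (w := w).
  - intros n. apply Rabs_le_between'. apply Hb.
  - pose proof (proj1 (is_lim_seq_opp _ _) Hw) as L. simpl in L. rewrite Ropp_0 in L. exact L.
  - exact Hw.
Qed.

Lemma CV_radius_bounded : forall (a : nat -> R) x, (forall n, Rabs (a n) <= 1) -> Rabs x < 1 ->
  Rbar_lt (Rabs x) (CV_radius a).
Proof.
  intros a x Ha Hx.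
  set (r := (1 + Rabs x)/2).
  assert (Hr0 : 0 <= r) by (unfold r; pose proof (Rabs_pos x); lra).
  assert (Hd : CV_disk a r).
  { unfold CV_disk. apply (@ex_series_le R_AbsRing R_CompleteNormedModule) with (b := fun n => r^n).
    - intros n. change (Rabs (Rabs (a n * r^n)) <= r^n). rewrite Rabs_Rabsolu, Rabs_mult.
      rewrite (Rabs_pos_eq (r^n)) by (apply pow_le; exact Hr0).
      replace (r^n) with (1 * r^n) at 2 by ring. apply Rmult_le_compat_r; [apply pow_le; exact Hr0| apply Ha].
    - apply ex_series_geom. rewrite Rabs_pos_eq by exact Hr0. unfold r; lra. }
  pose proof (proj1 (Lub_Rbar_correct (CV_disk a)) r Hd) as Hle.
  unfold CV_radius. destruct (Lub_Rbar (CV_disk a)) as [c| |]; simpl in *; auto.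
  unfold r in Hle. lra.
Qed.

Lemma nlim : forall r, Rabs r < 1 -> is_lim_seq (fun n => (INR n + 3) * Rabs r ^ n) 0.
Proof.
  intros r Hr.
  assert (H1 : Rbar_lt (Rabs (Rabs r)) (CV_radius (fun _ : nat => 1))).
  { apply CV_radius_bounded. intros; rewrite Rabs_R1; lra. rewrite Rabs_Rabsolu; exact Hr. }
  pose proof (ex_pseries_derive _ _ H1) as H2.
  pose proof (ex_series_lim_0 _ H2) as H3.
  assert (H4 : is_lim_seq (fun n => 2 * Rabs r ^ n) 0).
  { replace (Finite 0) with (Rbar_mult 2 0) by (simpl; f_equal; ring).
    apply is_lim_seq_scal_l. apply is_lim_seq_geom. rewrite Rabs_Rabsolu; exact Hr. }
  pose proof (is_lim_seq_plus' _ _ 0 0 H3 H4) as H5.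
  rewrite Rplus_0_r in H5.
  apply (is_lim_seq_ext _ _ _ (fun n => eq_refl) ) in H5.
  eapply is_lim_seq_ext; [|exact H5].
  intros n. cbv beta. unfold PS_derive. rewrite pow_n_pow. change (scal (Rabs r ^ n) (INR (S n) * 1)) with (Rabs r ^ n * (INR (S n) * 1)).
  rewrite S_INR. ring.
Qed.

Lemma dsum_R : forall (a u : nat -> R) T D l,
  (forall n, a n = u (S (S n)) - T * u (S n) + D * u n) -> u 1%nat = 0 ->
  l <> 0 -> T = 2 / l -> D = 1 / (l * l) ->
  forall N, sum_n (fun k => INR (S k) * a (S k) * l^k) N =
    INR (S (S N)) * l^(S N) * (T * u (S (S (S N))) - D * u (S (S N)))
    - INR (S (S (S N))) * D * l^(S (S N)) * u (S (S (S N))).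
Proof.
  intros a u T D l Ha H1 Hl HT HD N. induction N as [|N IH].
  - rewrite sum_O. rewrite Ha, H1. subst T D. simpl. field. exact Hl.
  - rewrite sum_Sn. change plus with Rplus. rewrite IH. cbv beta. rewrite (Ha (S (S N))).
    rewrite !S_INR. subst T D. simpl pow. apply Rminus_diag_uniq. field. exact Hl.
Qed.

Lemma deriv_zero : forall (a u : nat -> R) T D l,
  (forall n, a n = u (S (S n)) - T * u (S n) + D * u n) -> u 1%nat = 0 ->
  (forall n, Rabs (u n) <= 6) -> (forall n, Rabs (a n) <= 1) ->
  0 < l < 1 -> T = 2 / l -> D = 1 / (l * l) ->
  Derive (PSeries a) l = 0.
Proof.
  intros a u T D l Ha H1 Hu Hab Hl HT HD.
  assert (Hl1 : Rabs l < 1) by (rewrite Rabs_pos_eq; lra).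
  rewrite Derive_PSeries by (apply CV_radius_bounded; assumption).
  unfold PSeries. apply is_series_unique. unfold is_series.
  change (is_lim_seq (sum_n (fun k => PS_derive a k * l^k)) 0).
  apply (is_lim_seq_ext (fun N => INR (S (S N)) * l^(S N) * (T * u (S (S (S N))) - D * u (S (S N)))
    - INR (S (S (S N))) * D * l^(S (S N)) * u (S (S (S N))))).
  - intros N. rewrite <- (dsum_R a u T D l Ha H1 ltac:(lra) HT HD N). unfold PS_derive. reflexivity.
  - apply squeeze_gen with (w := fun n => (6 * Rabs T + 12 * Rabs D) * ((INR n + 3) * Rabs l ^ n)).
    + intros n.
      assert (Hp : 0 <= l ^ n) by (apply pow_le; lra).
      rewrite (Rabs_pos_eq l) by lra.
      pose proof (Hu (S (S (S n)))) as U3. pose proof (Hu (S (S n))) as U2.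
      assert (HT0 : 0 < T) by (rewrite HT; apply Rdiv_lt_0_compat; lra).
      assert (HD0 : 0 < D) by (rewrite HD; apply Rdiv_lt_0_compat; nra).
      rewrite (Rabs_pos_eq T), (Rabs_pos_eq D) by lra.
      rewrite !S_INR. simpl pow.
      assert (HN : 0 <= INR n) by apply pos_INR.
      set (q := l ^ n) in *. set (v3 := u (S (S (S n)))) in *. set (v2 := u (S (S n))) in *.
      set (m := INR n) in *.
      assert (E1 : Rabs (T * v3 - D * v2) <= 6 * T + 6 * D).
      { unfold Rminus. eapply Rle_trans; [apply Rabs_triang|]. rewrite Rabs_Ropp, !Rabs_mult, !(Rabs_pos_eq T), !(Rabs_pos_eq D) by lra.
        assert (T * Rabs v3 <= T * 6) by (apply Rmult_le_compat_l; lra).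
        assert (D * Rabs v2 <= D * 6) by (apply Rmult_le_compat_l; lra). lra. }
      assert (Hlq : 0 <= l * q <= q) by (split; nra).
      assert (Hllq : 0 <= l * (l * q) <= q) by (split; nra).
      assert (P1 : 0 <= (m + 1 + 1) * (l * q)) by (apply Rmult_le_pos; lra).
      assert (P1' : (m + 1 + 1) * (l * q) <= (m + 3) * q) by nra.
      assert (B1 : Rabs ((m + 1 + 1) * (l * q) * (T * v3 - D * v2)) <= (m + 3) * q * (6 * T + 6 * D)).
      { rewrite Rabs_mult, (Rabs_pos_eq ((m + 1 + 1) * (l * q))) by exact P1.
        apply Rmult_le_compat; try apply Rabs_pos; lra. }
      assert (P2 : 0 <= (m + 1 + 1 + 1) * D * (l * (l * q))) by (apply Rmult_le_pos; [apply Rmult_le_pos|]; lra).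
      assert (P2' : (m + 1 + 1 + 1) * D * (l * (l * q)) <= (m + 3) * D * q).
      { replace ((m + 1 + 1 + 1) * D * (l * (l * q))) with (((m+3) * D) * (l * (l * q))) by ring.
        apply Rmult_le_compat_l; [apply Rmult_le_pos|]; lra. }
      assert (B2 : Rabs ((m + 1 + 1 + 1) * D * (l * (l * q)) * v3) <= (m + 3) * q * (6 * D)).
      { rewrite Rabs_mult, (Rabs_pos_eq ((m + 1 + 1 + 1) * D * (l * (l * q)))) by exact P2.
        replace ((m + 3) * q * (6 * D)) with ((m+3) * D * q * 6) by ring.
        apply Rmult_le_compat; try apply Rabs_pos; lra. }
      unfold Rminus at 1. eapply Rle_trans; [apply Rabs_triang|]. rewrite Rabs_Ropp. nra.
    + replace (Finite 0) with (Rbar_mult (6 * Rabs T + 12 * Rabs D) 0) by (simpl; f_equal; ring).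
      apply is_lim_seq_scal_l. apply nlim. exact Hl1.
Qed.

End SerPart.
Import SerPart.


Lemma sqrt2_bounds : 1.41421356 < sqrt 2 < 1.41421357 /\ / sqrt 2 = sqrt 2 / 2.
Proof.
  assert (H2 : sqrt 2 * sqrt 2 = 2) by (apply sqrt_sqrt; lra).
  assert (H0 : 0 <= sqrt 2) by apply sqrt_pos.
  assert (Hn : sqrt 2 <> 0) by (intro H; rewrite H in H2; lra).
  split; [split; nra|]. field_simplify_eq; [|exact Hn]. lra.
Qed.

Lemma coeff_abs : forall a, coeffB a -> forall n, Rabs (a n) <= 1.
Proof.
  intros a [H0 H] n. destruct n as [|n].
  - rewrite H0, Rabs_R1. lra.
  - destruct (H (S n) ltac:(lia)) as [E|[E|E]]; rewrite E;
      unfold Rabs; destruct Rcase_abs; lra.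
Qed.

Lemma get_seq : forall T D, Rabs (T - D/a0 - a0) <= e0 -> Rabs (D/a0 - a0) <= e0 ->
  exists (a u : nat -> R), u 0%nat = 0 /\ u 1%nat = 0 /\ coeffB a /\
    (forall n, Rabs (u n) <= 6) /\
    (forall n, a n = u (S (S n)) - T * u (S n) + D * u n).
Proof.
  intros T D H1 H2.
  destruct (seq_exists T D a0) as [a [u [U0 [U1 [A0 [AD [UB AR]]]]]]];
    [unfold a0; lra|exact H1|exact H2|exact H1|].
  exists a, u. repeat split; auto.
Qed.

Lemma inv_bounds : forall g, 0 < g -> Rabs (g - / sqrt 2) < eta ->
  141420/100000 <= / g <= 141423/100000.
Proof.
  intros g Hg H. destruct sqrt2_bounds as [[S1 S2] S3]. rewrite S3 in H.
  unfold eta in H. apply Rabs_def2 in H. destruct H as [H H'].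
  assert (E : g * / g = 1) by (field; lra).
  assert (0 < / g) by (apply Rinv_0_lt_compat; lra).
  split; nra.
Qed.

Lemma AB_bounds : forall X Y, 141420/100000 <= X <= 141423/100000 -> 141420/100000 <= Y <= 141423/100000 ->
  Rabs (X + Y - X*Y/a0 - a0) <= e0 /\ Rabs (X*Y/a0 - a0) <= e0.
Proof.
  intros X Y HX HY.
  assert (P1 : 141420/100000 * (141420/100000) <= X * Y) by (apply Rmult_le_compat; lra).
  assert (P2 : X * Y <= 141423/100000 * (141423/100000)) by (apply Rmult_le_compat; lra).
  replace (X * Y / a0) with (X * Y * (100000/141421)) by (unfold a0; field).
  unfold a0, e0. split; apply Rabs_le; lra.
Qed.

Lemma partN : forall g l : R, 0 < g < 1 -> 0 < l < 1 ->
     Rabs (g - / sqrt 2) < eta -> Rabs (l - / sqrt 2) < eta -> setN g l.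
Proof.
  intros g l Hg Hl Hgs Hls.
  pose proof (inv_bounds g ltac:(lra) Hgs) as BX.
  pose proof (inv_bounds l ltac:(lra) Hls) as BY.
  destruct (AB_bounds _ _ BX BY) as [H1 H2].
  destruct (get_seq (/g + /l) (/g * /l) H1 H2) as [a [u [U0 [U1 [Ca [UB AR]]]]]].
  split; [lra|]. split; [lra|]. exists a. split; [exact Ca|]. split.
  - apply (series_zero_R a u (/g + /l) (/g * /l) g AR U0 U1 UB); [rewrite Rabs_pos_eq; lra|].
    field. split; lra.
  - apply (series_zero_R a u (/g + /l) (/g * /l) l AR U0 U1 UB); [rewrite Rabs_pos_eq; lra|].
    field. split; lra.
Qed.

Lemma partO : forall l : R, 0 < l < 1 -> Rabs (l - / sqrt 2) < eta -> setO l.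
Proof.
  intros l Hl Hls.
  pose proof (inv_bounds l ltac:(lra) Hls) as BX.
  destruct (AB_bounds _ _ BX BX) as [H1 H2].
  destruct (get_seq (/l + /l) (/l * /l) H1 H2) as [a [u [U0 [U1 [Ca [UB AR]]]]]].
  split; [lra|]. exists a. split; [exact Ca|]. split.
  - apply (series_zero_R a u (/l + /l) (/l * /l) l AR U0 U1 UB); [rewrite Rabs_pos_eq; lra|].
    field. lra.
  - apply (deriv_zero a u (/l + /l) (/l * /l) l AR U1 UB (coeff_abs a Ca) Hl).
    + field. lra.
    + field. lra.
Qed.

Lemma im_le_Cmod' : forall c : C, Rabs (Im c) <= Cmod c.
Proof.
  intros c. pose proof (Cmod2_alt c) as E.
  pose proof (Cmod_ge_0 c) as H0. pose proof (Rabs_pos (Im c)) as H1.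
  assert (H2 : Rabs (Im c) * Rabs (Im c) = Im c * Im c)
    by (rewrite <- Rabs_mult; apply Rabs_pos_eq; apply Rle_0_sqr).
  simpl in E. pose proof (Rle_0_sqr (Re c)). unfold Rsqr in *.
  destruct (Rle_lt_dec (Rabs (Im c)) (Cmod c)) as [L|L]; [exact L|nra].
Qed.

Lemma partM : forall z : C, Cmod z < 1 ->
     Cmod (Cminus z (RtoC (/ sqrt 2))) < 3 * eta / 4 -> setM z.
Proof.
  intros z Hz Hd.
  destruct sqrt2_bounds as [[S1 S2] S3]. rewrite S3 in Hd.
  pose proof (re_le_Cmod (Cminus z (RtoC (sqrt 2 / 2)))) as HR.
  pose proof (im_le_Cmod' (Cminus z (RtoC (sqrt 2 / 2)))) as HI.
  destruct z as [x y]. simpl in HR, HI.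
  unfold eta in Hd. rewrite <- Rminus_def in HR, HI.
  assert (Hx : Rabs (x - sqrt 2 / 2) < 3 / 1000000) by lra.
  assert (Hy : Rabs (y - 0) < 3 / 1000000) by lra.
  rewrite Rminus_0_r in Hy.
  apply Rabs_def2 in Hx. apply Rabs_def2 in Hy.
  destruct Hx as [Hx1 Hx2]. destruct Hy as [Hy1 Hy2].
  set (r := x*x + y*y).
  assert (Hy2' : y*y <= 1/100000000000) by nra.
  assert (Hr1 : 707103/1000000 * (707103/1000000) <= r) by (unfold r; nra).
  assert (Hr2 : r <= 707111/1000000 * (707111/1000000) + 1/100000000000) by (unfold r; nra).
  assert (Hr0 : 0 < r) by lra.
  set (p := / r).
  assert (Ep : r * p = 1) by (unfold p; field; lra).
  assert (Hp0 : 0 < p) by (unfold p; apply Rinv_0_lt_compat; lra).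
  assert (Hp1 : 199997/100000 <= p) by nra.
  assert (Hp2 : p <= 200003/100000) by nra.
  set (T := 2 * x * p). set (D := p).
  assert (Hxp1 : 707103/1000000 * (199997/100000) <= x * p) by (apply Rmult_le_compat; lra).
  assert (Hxp2 : x * p <= 707111/1000000 * (200003/100000)) by (apply Rmult_le_compat; lra).
  assert (H1 : Rabs (T - D/a0 - a0) <= e0).
  { unfold T, D. replace (p / a0) with (p * (100000/141421)) by (unfold a0; field).
    unfold a0, e0. apply Rabs_le. lra. }
  assert (H2 : Rabs (D/a0 - a0) <= e0).
  { unfold D. replace (p / a0) with (p * (100000/141421)) by (unfold a0; field).
    unfold a0, e0. apply Rabs_le. lra. }
  destruct (get_seq T D H1 H2) as [a [u [U0 [U1 [Ca [UB AR]]]]]].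
  split; [exact Hz|]. exists a. split; [exact Ca|].
  unfold zeroC.
  apply (series_zero_C a u T D (x,y) AR U0 U1 UB Hz).
  unfold T, D, p. unfold r. apply injective_projections; simpl; field; unfold r in Hr0; lra.
Qed.

Theorem theorem2p10 :
  (forall g l : R, 0 < g < 1 -> 0 < l < 1 ->
     Rabs (g - / sqrt 2) < eta -> Rabs (l - / sqrt 2) < eta -> setN g l) /\
  (forall z : C, Cmod z < 1 ->
     Cmod (Cminus z (RtoC (/ sqrt 2))) < 3 * eta / 4 -> setM z) /\
  (forall l : R, 0 < l < 1 -> Rabs (l - / sqrt 2) < eta -> setO l).
Proof.
  split; [exact partN|]. split; [exact partM|exact partO].
Qed.
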